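(* Let $\Gamma$ be a residually finite countable discrete group and $\Gamma_n\to e$. For $f\in1+pM_r(c_0(\Gamma,\mathbb{Z}_p))$ let $f^{(n)}\in1+pM_r(\mathbb{Z}_p\Gamma^{(n)})$ be its image, where $\Gamma^{(n)}=\Gamma/\Gamma_n$. Then \[ \log_p\det\nolimits_\Gamma f=\lim_{n\to\infty}\log_p\det\nolimits_{\Gamma^{(n)}}f^{(n)}\quad\text{in }\mathbb{Z}_p. \]
   Context: $\Gamma_n\to e$ means a sequence of normal subgroups of finite index in $\Gamma$ such that only the neutral element $e$ lies in infinitely many $\Gamma_n$. $c_0(\Gamma)$ is the $\mathbb{Q}_p$-algebra of formal series $\sum x_\gamma\gamma$, $x_\gamma\in\mathbb{Q}_p$, $|x_\gamma|_p\to0$ as $\gamma\to\infty$ (for each $\varepsilon>0$ only finitely many $|x_\gamma|_p\ge\varepsilon$), with convolution product and norm $\max|x_\gamma|_p$; $c_0(\Gamma,\mathbb{Z}_p)$ the subring of norm $\le1$ elements. For a normal subgroup $N$ the reduction $c_0(\Gamma)\to c_0(\Gamma/N)$, $\sum x_\gamma\gamma\mapsto\sum x_\gamma\,\gamma N$, is applied entrywise to matrices. $\mathrm{tr}_\Gamma:M_r(c_0(\Gamma))\to\mathbb{Q}_p$ sends $(f_{ij})$ to $\sum_i$(coefficient of $e$ in $f_{ii}$). For $u\in1+pM_r(c_0(\Gamma,\mathbb{Z}_p))$, $\log u=-\sum_{\nu\ge1}(1-u)^\nu/\nu$ and $\log_p\det_\Gamma u:=\mathrm{tr}_\Gamma(\log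 u)$ (same definition for the finite groups $\Gamma^{(n)}$). *)

(* Defs.v *)
From Stdlib Require Import ClassicalEpsilon.
From mathcomp Require Import all_boot all_algebra.
Unset Printing Implicit Defensive.
Import GRing.Theory Num.Theory.
Local Open Scope ring_scope.

(* p-adic integers Z_p = lim_k Z/p^k Z.  x : Zpad is the sequence of its *)
(* residues: x k is the representative in [0, p^k) of x mod p^k.       *)
Definition Zpad := nat -> int.

Section Padic.
Variable p : nat.

Definition pk (k : nat) : int := (p ^ k)%N%:Z.

Definition isZp (x : Zpad) : Prop :=
  forall k, (0 <= x k) /\ (x k < pk k) /\ (x k.+1 %% pk k)%Z = x k.

Definition zeroZp : Zpad := fun _ => 0.
Definition oneZp : Zpad := fun k => (1 %% pk k)%Z.
Definition natZp (n : nat) : Zpad := fun k => (n%:Z %% pk k)%Z.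
Definition addZp (x y : Zpad) : Zpad := fun k => ((x k + y k) %% pk k)%Z.
Definition oppZp (x : Zpad) : Zpad := fun k => ((- x k) %% pk k)%Z.
Definition subZp (x y : Zpad) : Zpad := addZp x (oppZp y).
Definition mulZp (x y : Zpad) : Zpad := fun k => ((x k * y k) %% pk k)%Z.

Definition invmod (u m : nat) : int := ((egcdz u%:Z m%:Z).1 %% m%:Z)%Z.

(* exact division x / nu in Z_p, for x in nu Z_p (nu >= 1):
   nu = p^v * u with p not dividing u; x/nu = (x / p^v) * u^{-1}. *)
Definition divZp (nu : nat) (x : Zpad) : Zpad := fun k =>
  let v := logn p nu in
  let u := (nu %/ p ^ v)%N in
  (((x (k + v)%N %/ pk v)%Z * invmod u (p ^ k)) %% pk k)%Z.

Definition padic_conv (a : nat -> Zpad) (L : Zpad) : Prop :=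
  forall k, exists N, forall n, (N <= n)%N -> a n k = L k.

Definition padic_lim (a : nat -> Zpad) : Zpad := fun k =>
  epsilon (inhabits 0) (fun v : int => exists N, forall n, (N <= n)%N -> a n k = v).

Definition padic_series (a : nat -> Zpad) : Zpad :=
  padic_lim (fun N => \big[addZp/zeroZp]_(n < N) a n).

End Padic.

(* Group data on a countable carrier.  gmem selects the actual group   *)
(* elements (used to realise quotient groups by canonical coset        *)
(* representatives inside the carrier of the big group).               *)
Record gdata := GData {
  gcar : countType;
  gmem : pred gcar;
  gmul : gcar -> gcar -> gcar;
  ginv : gcar -> gcar;
  gone : gcar }.

Definition is_group {T : Type} (mul : T -> T -> T) (inv : T -> T) (one : T) :=
  [/\ forall x y z, mul x (mul y z) = mul (mul x y) z,
      forall x, mul one x = x &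
      forall x, mul (inv x) x = one].

Definition normal_fi {T : eqType} (mul : T -> T -> T) (inv : T -> T) (one : T)
  (N : T -> bool) : Prop :=
  [/\ N one,
      forall x y, N x -> N y -> N (mul x y),
      forall x, N x -> N (inv x),
      forall g x, N x -> N (mul (mul (inv g) x) g) &
      exists s : seq T, forall x, exists2 a, a \in s & N (mul (inv a) x)].

Definition residually_finite {T : eqType} (mul : T -> T -> T) (inv : T -> T)
  (one : T) : Prop :=
  forall x, x <> one -> exists N, normal_fi mul inv one N /\ ~~ N x.

Definition tends_to_e {T : Type} (one : T) (Gn : nat -> T -> bool) : Prop :=
  forall x, x <> one -> exists M, forall n, (M <= n)%N -> ~~ Gn n x.

Section GroupAlgebra.
Variable p : nat.
Variable G : gdata.
Local Notation T := (gcar G).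

Definition padic_sum (F : T -> Zpad) : Zpad :=
  padic_series p (fun i => match @pickle_inv T i with
                           | Some x => if gmem G x then F x else zeroZp
                           | None => zeroZp end).

Definition c0Zp (a : T -> Zpad) : Prop :=
  (forall x, isZp p (a x)) /\
  (forall k, exists s : seq T, forall x, gmem G x -> x \notin s -> a x k = 0).

Definition conv (a b : T -> Zpad) : T -> Zpad := fun x =>
  padic_sum (fun y => mulZp p (a y) (b (gmul G (ginv G y) x))).

Variable r : nat.
Definition mat := 'I_r -> 'I_r -> T -> Zpad.

Definition oneM : mat := fun i j x =>
  if (i == j) && (x == gone G) then oneZp p else zeroZp.
Definition addM (A B : mat) : mat := fun i j x => addZp p (A i j x) (B i j x).
Definition subM (A B : mat) : mat := fun i j x => subZp p (A i j x) (B i j x).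
Definition scaleM (c : nat) (A : mat) : mat :=
  fun i j x => mulZp p (natZp p c) (A i j x).
Definition mulM (A B : mat) : mat := fun i j x =>
  \big[addZp p/zeroZp]_(l < r) conv (A i l) (B l j) x.
Definition powM (A : mat) (n : nat) : mat := iter n (mulM A) oneM.

Definition logM (u : mat) : mat := fun i j x =>
  oppZp p (padic_series p (fun n =>
     divZp p n.+1 (powM (subM oneM u) n.+1 i j x))).

Definition trG (A : mat) : Zpad :=
  \big[addZp p/zeroZp]_(i < r) A i i (gone G).

Definition logdet (u : mat) : Zpad := trG (logM u).

End GroupAlgebra.

(* Quotient group G / N, N a normal subgroup: each coset x N is        *)
(* represented by its element of least pickle code.                    *)
Section Quotient.
Variables (T : countType) (mul : T -> T -> T) (inv : T -> T) (one : T).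
Variable N : T -> bool.

Definition canon (x : T) : T :=
  head x [seq y <- pmap (@pickle_inv T) (iota 0 (pickle x).+1)
         | N (mul (inv x) y)].

Definition quotG : gdata :=
  GData T (fun x => canon x == x) (fun x y => canon (mul x y))
         (fun x => canon (inv x)) (canon one).

Definition reduce (p r : nat) (f : mat (GData T predT mul inv one) r) :
    mat quotG r :=
  fun i j C => padic_sum p (GData T predT mul inv one)
                 (fun x => if canon x == C then f i j x else zeroZp).

End Quotient.

(* Main.v *)
Require Import Defs.
From Stdlib Require Import ClassicalEpsilon FunctionalExtensionality PropExtensionality.
From mathcomp Require Import all_boot all_order all_algebra zify.
Import Order.TTheory GRing.Theory Num.Theory.

Section Aux.
Local Open Scope ring_scope.

Lemma pk_gt0 p k : (0 < p)%N -> 0 < pk p k.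
Proof. by move=> p0; rewrite /pk ltz_nat expn_gt0 p0. Qed.

Lemma pk_neq0 p k : (0 < p)%N -> pk p k != 0.
Proof. by move=> p0; rewrite gt_eqF // pk_gt0. Qed.

Lemma big_addZp p k (I : Type) (s : seq I) (P : pred I) (F : I -> Zpad) :
  (\big[addZp p/zeroZp]_(i <- s | P i) F i) k = ((\sum_(i <- s | P i) F i k) %% pk p k)%Z.
Proof.
elim: s => [|i s IH]; first by rewrite !big_nil /zeroZp mod0z.
rewrite !big_cons; case: (P i) => //.
by rewrite /addZp IH modzDmr.
Qed.

Lemma padic_lim_eq (a : nat -> Zpad) k v N :
  (forall n, (N <= n)%N -> a n k = v) -> padic_lim a k = v.
Proof.
move=> H; rewrite /padic_lim.
set P := (fun v0 : int => _).
have : exists v0, P v0 by exists v, N.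
move=> /(epsilon_spec (inhabits 0)) [N' HN'].
by rewrite -(HN' (maxn N N')) ?leq_maxr // H // leq_maxl.
Qed.

Lemma padic_series_eq p (a : nat -> Zpad) k N :
  (forall n, (N <= n)%N -> a n k = 0) ->
  padic_series p a k = ((\sum_(n < N) a n k) %% pk p k)%Z.
Proof.
move=> H; rewrite /padic_series; apply: (@padic_lim_eq _ _ _ N) => n Nn.
rewrite big_addZp; congr (_ %% _)%Z.
rewrite -(big_mkord xpredT (fun i => a i k)) (@big_cat_nat _ _ _ N 0 n) //= /=.
rewrite [X in _ + X]big1_seq ?addr0 ?big_mkord // => i /andP[_].
by rewrite mem_index_iota => /andP[Ni _]; apply: H.
Qed.

Lemma padic_series_ext p (a b : nat -> Zpad) k :
  (forall n, a n k = b n k) -> padic_series p a k = padic_series p b k.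
Proof.
move=> H; rewrite /padic_series /padic_lim; congr (epsilon _ _).
apply: functional_extensionality => v; apply: propositional_extensionality.
have E : forall N, (\big[addZp p/zeroZp]_(n < N) a n) k = (\big[addZp p/zeroZp]_(n < N) b n) k.
  by move=> N; rewrite !big_addZp; congr (_ %% _)%Z; apply: eq_bigr.
by split=> -[N HN]; exists N => n /HN; rewrite E.
Qed.

Lemma sum_cover (T : eqType) (s1 s2 : seq T) (P : pred T) (F : T -> int) :
  uniq s1 -> uniq s2 ->
  (forall x, P x -> x \notin s1 -> F x = 0) ->
  (forall x, P x -> x \notin s2 -> F x = 0) ->
  \sum_(x <- s1 | P x) F x = \sum_(x <- s2 | P x) F x.
Proof.
move=> u1 u2 H1 H2.
have -> : \sum_(x <- s1 | P x) F x = \sum_(x <- filter (mem s2) s1 | P x) F x.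
  rewrite big_filter_cond big_mkcond [RHS]big_mkcond; apply: eq_bigr => x _.
  case Px: (P x) => //=; case: (boolP (x \in s2)) => // xn; by rewrite (H2 _ Px xn).
have -> : \sum_(x <- s2 | P x) F x = \sum_(x <- filter (mem s1) s2 | P x) F x.
  rewrite big_filter_cond big_mkcond [RHS]big_mkcond; apply: eq_bigr => x _.
  case Px: (P x) => //=; case: (boolP (x \in s1)) => // xn; by rewrite (H1 _ Px xn).
apply: perm_big; apply: uniq_perm; rewrite ?filter_uniq // => x.
by rewrite !mem_filter andbC.
Qed.

Lemma sum_pred1_seq (T : eqType) (s : seq T) (x : T) (F : T -> int) :
  uniq s -> x \in s -> \sum_(y <- s | y == x) F y = F x.
Proof.
move=> us xs; rewrite (big_rem x) // eqxx big1_seq; first exact: Monoid.mulm1.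
by move=> y /andP[/eqP-> ]; rewrite mem_rem_uniqF.
Qed.

Lemma padic_sum_fin p (G : gdata) (F : gcar G -> Zpad) k (s : seq (gcar G)) :
  uniq s -> (forall x, gmem G x -> x \notin s -> F x k = 0) ->
  padic_sum p G F k = ((\sum_(x <- s | gmem G x) F x k) %% pk p k)%Z.
Proof.
move=> us Hs; rewrite /padic_sum.
set N := (\sum_(x <- s) (pickle x).+1)%N.
have Nx : forall x, x \in s -> (pickle x < N)%N.
  move=> x xs; by rewrite /N (big_rem x) //= leq_addr.
rewrite (@padic_series_eq _ _ _ N); last first.
  move=> n Nn; case E: (pickle_inv n) => [x|] //.
  have px := @pickle_invK (gcar G) n; rewrite E /= in px.
  case: ifP => // gx; apply: Hs => //; apply/negP => xs.
  by move: (Nx _ xs); rewrite px ltnNge Nn.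
congr (_ %% _)%Z.
transitivity (\sum_(n < N) \sum_(x <- s | gmem G x && (pickle x == n)) F x k).
  apply: eq_bigr => n _; case E: (pickle_inv n) => [x|]; last first.
    rewrite big1_seq // => y /andP[/andP[_ /eqP py] _].
    by move: (pickleK_inv y); rewrite py E.
  have px := @pickle_invK (gcar G) n; rewrite E /= in px.
  rewrite (eq_bigl (fun y => gmem G y && (y == x))); last first.
    move=> y; congr (_ && _); rewrite -px; apply/eqP/eqP => [e|->//].
    exact: (pcan_inj (@pickleK_inv _)).
  rewrite -big_filter_cond; case: (boolP (x \in s)) => xs.
    case gx: (gmem G x); first by rewrite sum_pred1_seq ?filter_uniq // mem_filter gx.
    by rewrite big1_seq // => y /andP[/eqP-> ]; rewrite mem_filter gx.
  rewrite big1_seq; last by move=> y /andP[/eqP-> ]; rewrite mem_filter (negPf xs) andbF.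
  by case: ifP => // gx; rewrite Hs.
rewrite (exchange_big_dep (gmem G)) /=; last by move=> n x _ /andP[].
rewrite big_seq_cond [RHS]big_seq_cond; apply: eq_bigr => x /andP[xs gx].
rewrite (bigD1 (Ordinal (Nx _ xs))) /=; last by rewrite gx eqxx.
rewrite big1 ?addr0 // => i /andP[/andP[_ /eqP pi] ni]; case/eqP: ni.
by apply: val_inj; rewrite /= pi.
Qed.

End Aux.

Section Grp.
Local Set Implicit Arguments.
Local Unset Strict Implicit.
Variables (T : countType) (mul : T -> T -> T) (inv : T -> T) (one : T).
Hypothesis Hg : is_group mul inv one.

Lemma mulA x y z : mul x (mul y z) = mul (mul x y) z.
Proof. by case: Hg. Qed.
Lemma mul1 x : mul one x = x.
Proof. by case: Hg. Qed.
Lemma mulVx x : mul (inv x) x = one.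
Proof. by case: Hg. Qed.
Lemma mulI x y z : mul x y = mul x z -> y = z.
Proof.
by move=> e; rewrite -(mul1 y) -(mul1 z) -(mulVx x) -!mulA e.
Qed.
Lemma mulxV x : mul x (inv x) = one.
Proof.
rewrite -[LHS]mul1 -(mulVx (inv x)) -mulA [mul (inv x) (mul x _)]mulA mulVx.
by rewrite mul1 mulVx.
Qed.
Lemma mulx1 x : mul x one = x.
Proof. by rewrite -(mulVx x) mulA mulxV mul1. Qed.
Lemma invK x : inv (inv x) = x.
Proof. by apply: (@mulI (inv x)); rewrite mulVx mulxV. Qed.
Lemma invM x y : inv (mul x y) = mul (inv y) (inv x).
Proof.
apply: (@mulI (mul x y)); rewrite mulxV -mulA [mul y _]mulA mulxV mul1 mulxV //.
Qed.
Lemma inv1 : inv one = one.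
Proof. by rewrite -[LHS]mul1 mulxV. Qed.

Variable N : T -> bool.
Hypothesis HN : normal_fi mul inv one N.

Lemma N1 : N one. Proof. by case: HN. Qed.
Lemma NM x y : N x -> N y -> N (mul x y). Proof. case: HN => _ h _ _ _; exact: h. Qed.
Lemma NV x : N x -> N (inv x). Proof. case: HN => _ _ h _ _; exact: h. Qed.
Lemma NJ g x : N x -> N (mul (mul (inv g) x) g). Proof. case: HN => _ _ _ h _; exact: h. Qed.

Lemma rel_trans x y z : N (mul (inv x) y) -> N (mul (inv y) z) -> N (mul (inv x) z).
Proof.
move=> h1 h2; have := NM h1 h2; by rewrite -mulA [mul y _]mulA mulxV mul1.
Qed.
Lemma rel_sym x y : N (mul (inv x) y) -> N (mul (inv y) x).
Proof. by move/NV; rewrite invM invK. Qed.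
Lemma rel_refl x : N (mul (inv x) x).
Proof. by rewrite mulVx N1. Qed.

Local Notation canon := (Defs.canon T mul inv N).

Lemma canon_in x : N (mul (inv x) (canon x)).
Proof.
rewrite /canon; set s := filter _ _.
case E: s => [|y t] /=; first exact: rel_refl.
have : y \in s by rewrite E mem_head.
by rewrite mem_filter => /andP[].
Qed.

Lemma mem_L x n : (x \in pmap (@pickle_inv T) (iota 0 n)) = (pickle x < n)%N.
Proof.
rewrite mem_pmap; apply/mapP/idP => [[i]|xn].
  rewrite mem_iota add0n => /andP[_ i_n] e.
  by have := @pickle_invK T i; rewrite -e /= => ->.
by exists (pickle x); rewrite ?mem_iota ?add0n // pickleK_inv.
Qed.

Lemma head_prefix (P : pred T) x0 x1 n n' z :
  (n <= n')%N -> (pickle z < n)%N -> P z ->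
  head x0 (filter P (pmap (@pickle_inv T) (iota 0 n))) =
  head x1 (filter P (pmap (@pickle_inv T) (iota 0 n'))).
Proof.
move=> nn' zn Pz; rewrite -(subnKC nn') iotaD pmap_cat filter_cat.
case E: (filter P _) => [|y t] /=.
  have : z \in filter P (pmap (@pickle_inv T) (iota 0 n)) by rewrite mem_filter Pz mem_L.
  by rewrite E.
by [].
Qed.

Lemma canon_eq x y : N (mul (inv x) y) -> canon x = canon y.
Proof.
move=> hxy; rewrite /canon.
rewrite (@eq_filter _ (fun z => N (mul (inv y) z)) (fun z => N (mul (inv x) z))); last first.
  move=> z; apply/idP/idP => h; first exact: rel_trans hxy h.
  exact: rel_trans (rel_sym hxy) h.
set m := maxn (pickle x).+1 (pickle y).+1.
rewrite (@head_prefix _ x x _ m x) ?leq_maxl ?rel_refl //.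
rewrite (@head_prefix _ y x _ m y) ?leq_maxr //.
Qed.

Lemma canon_rel x y : canon x = canon y -> N (mul (inv x) y).
Proof.
move=> e; apply: rel_trans (canon_in x) _; rewrite e; exact: rel_sym (canon_in y).
Qed.

Lemma canonK x : canon (canon x) = canon x.
Proof. by symmetry; apply: canon_eq; apply: canon_in. Qed.


Lemma rel_inv a b : N (mul (inv a) b) -> N (mul (inv (inv a)) (inv b)).
Proof.
move=> h; rewrite invK; have := NJ (inv a) (NV h).
by rewrite invK invM invK !mulA -[mul (mul _ a) (inv a)]mulA mulxV mulx1.
Qed.

Lemma rel_mulr a b c : N (mul (inv a) b) -> N (mul (inv (mul a c)) (mul b c)).
Proof.
move=> h; have := NJ c h; by rewrite invM !mulA.
Qed.

Lemma canon_mul_rep x z C : canon C = C ->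
  (canon (mul x z) == C) = (canon z == canon (mul (canon (inv (canon x))) C)).
Proof.
move=> cC.
have E : canon (mul (canon (inv (canon x))) C) = canon (mul (inv x) C).
  apply: canon_eq; apply: rel_sym; apply: rel_mulr.
  apply: rel_trans (canon_in (inv (canon x))).
  by apply: rel_inv; apply: canon_in.
rewrite E; apply/eqP/eqP => h.
  apply: canon_eq; rewrite -cC in h; have := canon_rel h.
  by rewrite invM mulA.
rewrite -cC; apply: canon_eq; have := canon_rel h.
by rewrite invM mulA.
Qed.

End Grp.

Section Modz.
Local Open Scope ring_scope.
Lemma modz_sum (I : Type) (s : seq I) (P : pred I) (F : I -> int) (d : int) :
  ((\sum_(i <- s | P i) (F i %% d)%Z) %% d)%Z = ((\sum_(i <- s | P i) F i) %% d)%Z.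
Proof.
elim: s => [|i s IH]; first by rewrite !big_nil.
rewrite !big_cons; case: (P i) => //.
by rewrite -[in LHS]modzDmr IH modzDmr modzDml.
Qed.

Lemma eq_modz_sum (I : Type) (s : seq I) (P : pred I) (F G : I -> int) (d : int) :
  (forall i, P i -> (F i %% d)%Z = (G i %% d)%Z) ->
  ((\sum_(i <- s | P i) F i) %% d)%Z = ((\sum_(i <- s | P i) G i) %% d)%Z.
Proof.
by move=> H; rewrite -modz_sum (eq_bigr _ H) modz_sum.
Qed.
Lemma modzBmr (x y d : int) : ((x + - (y %% d)%Z) %% d)%Z = ((x - y) %% d)%Z.
Proof. by rewrite -modzDmr modzNm modzDmr. Qed.
End Modz.

Section Main.
Local Set Implicit Arguments.
Local Unset Strict Implicit.
Local Open Scope ring_scope.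
Variables (p K : nat).
Hypothesis p0 : (0 < p)%N.
Variables (T : countType) (mul : T -> T -> T) (inv : T -> T) (one : T).
Hypothesis Hg : is_group mul inv one.
Variable N : T -> bool.
Hypothesis HN : normal_fi mul inv one N.

Local Notation M := (pk p K).
Local Notation Gam := (GData T predT mul inv one).
Local Notation Q := (quotG T mul inv one N).
Local Notation canon := (Defs.canon T mul inv N).

Definition red (a : T -> Zpad) : T -> Zpad := fun C =>
  padic_sum p Gam (fun x => if canon x == C then a x else zeroZp).

Definition supp (s : seq T) (a : T -> Zpad) := forall x, x \notin s -> a x K = 0.

Lemma convG_fin (a b : T -> Zpad) sa x : uniq sa -> supp sa a ->
  conv p Gam a b x K = ((\sum_(y <- sa) ((a y K * b (mul (inv y) x) K) %% M)%Z) %% M)%Z.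
Proof.
move=> us H; rewrite /conv (@padic_sum_fin p Gam _ K sa) //= => y _ yn.
by rewrite /mulZp H // mul0r mod0z.
Qed.

Lemma convQ_fin (a b : T -> Zpad) sq C : uniq sq ->
  (forall y, canon y == y -> y \notin sq -> a y K = 0) ->
  conv p Q a b C K = ((\sum_(y <- sq | canon y == y)
     ((a y K * b (canon (mul (canon (inv y)) C)) K) %% M)%Z) %% M)%Z.
Proof.
move=> us H; rewrite /conv (@padic_sum_fin p Q _ K sq) //= => y yr yn.
by rewrite /mulZp H // mul0r mod0z.
Qed.

Lemma red_fin (a : T -> Zpad) s C : uniq s -> supp s a ->
  red a C K = ((\sum_(x <- s) (if canon x == C then a x K else 0)) %% M)%Z.
Proof.
move=> us H; rewrite /red (@padic_sum_fin p Gam _ K s) //=.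
  by congr (_ %% _)%Z; apply: eq_bigr => x _; case: ifP.
by move=> x _ xn; case: ifP => // _; rewrite H.
Qed.

Definition prods (sa sb : seq T) := undup [seq mul y z | y <- sa, z <- sb].

Lemma convG_supp (a b : T -> Zpad) sa sb : uniq sa -> supp sa a -> supp sb b ->
  supp (prods sa sb) (conv p Gam a b).
Proof.
move=> us Ha Hb x xn; rewrite (convG_fin _ _ us Ha) big1_seq ?mod0z // => y /andP[_ ys].
rewrite Hb ?mulr0 ?mod0z //; apply: contra xn => zs.
rewrite mem_undup; apply/allpairsP; exists (y, mul (inv y) x) => /=; split=> //.
by rewrite (mulA Hg) (mulxV Hg) (mul1 Hg).
Qed.


Lemma hom_conv (a b a' b' : T -> Zpad) sa sb C :
  uniq sa -> uniq sb -> supp sa a -> supp sb b ->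
  (forall y, canon y == y -> a' y K = red a y K) ->
  (forall y, canon y == y -> b' y K = red b y K) ->
  canon C = C ->
  conv p Q a' b' C K = red (conv p Gam a b) C K.
Proof.
move=> usa usb Ha Hb ha hb cC.
set U := undup (map canon sa).
have aU : forall y, canon y == y -> y \notin U -> a' y K = 0.
  move=> y ry yn; rewrite (ha y ry) (red_fin _ usa Ha) big1_seq ?mod0z // => x /andP[_ xs].
  case: ifP => // /eqP e; case/negP: yn; by rewrite mem_undup -e map_f.
rewrite (convQ_fin _ _ (undup_uniq _) aU) modz_sum.
rewrite (red_fin _ (undup_uniq _) (convG_supp usa Ha Hb)).
set D := fun y => canon (mul (canon (inv y)) C).
set Sa := fun y => \sum_(x <- sa) (if canon x == y then a x K else 0).
set Sb := fun d => \sum_(z <- sb) (if canon z == d then b z K else 0).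
transitivity ((\sum_(y <- U | canon y == y) Sa y * Sb (D y)) %% M)%Z.
  apply: eq_modz_sum => y ry.
  have rD : canon (D y) == D y by rewrite /D (canonK Hg HN).
  by rewrite (ha y ry) (hb _ rD) (red_fin _ usa Ha) (red_fin _ usb Hb) modzMm.
transitivity ((\sum_(w <- prods sa sb) (if canon w == C then
     \sum_(x <- sa) a x K * b (mul (inv x) w) K else 0)) %% M)%Z; last first.
  apply: eq_modz_sum => w _; case: ifP => // _.
  by rewrite (convG_fin _ _ usa Ha) modz_mod modz_sum.
congr (_ %% _)%Z.
transitivity (\sum_(x <- sa) a x K * Sb (D (canon x))).
  transitivity (\sum_(y <- U | canon y == y) \sum_(x <- sa)
       (if canon x == y then a x K * Sb (D y) else 0)).
    apply: eq_bigr => y _; rewrite /Sa big_distrl /=; apply: eq_bigr => x _.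
    by case: ifP; rewrite ?mul0r.
  rewrite exchange_big /=; apply: eq_big_seq => x xs.
  transitivity (\sum_(y <- U | y == canon x) a x K * Sb (D y)).
    rewrite big_mkcond [RHS]big_mkcond; apply: eq_bigr => y _.
    case: (eqVneq y (canon x)) => [->|ne]; first by rewrite (canonK Hg HN) !eqxx.
    case: ifP => // _; by rewrite eq_sym (negPf ne).
  by rewrite sum_pred1_seq ?undup_uniq // mem_undup map_f.
symmetry.
transitivity (\sum_(w <- prods sa sb) \sum_(x <- sa)
    (if canon w == C then a x K * b (mul (inv x) w) K else 0)).
  apply: eq_bigr => w _; case: ifP => // _; by rewrite big1.
rewrite exchange_big /=; apply: eq_big_seq => x xs.
transitivity (a x K * \sum_(w <- prods sa sb) (if canon w == C then b (mul (inv x) w) K else 0)).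
  by rewrite big_distrr /=; apply: eq_bigr => w _; case: ifP; rewrite ?mulr0.
congr (_ * _).
have minj : injective (mul x) by move=> u v; apply: (mulI Hg).
have xinvx : forall z, mul (inv x) (mul x z) = z.
  by move=> z; rewrite (mulA Hg) (mulVx Hg) (mul1 Hg).
have xxinv : forall w, mul x (mul (inv x) w) = w.
  by move=> w; rewrite (mulA Hg) (mulxV Hg) (mul1 Hg).
rewrite (@sum_cover _ _ (map (mul x) sb) xpredT) ?undup_uniq ?(map_inj_uniq minj) //.
- rewrite big_map /Sb; apply: eq_bigr => z _.
  by rewrite xinvx (canon_mul_rep Hg HN _ _ cC).
- move=> w _ wn; case: ifP => // _; apply: Hb; apply: contra wn => zs.
  rewrite mem_undup; apply/allpairsP; exists (x, mul (inv x) w) => /=; split=> //.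
- move=> w _ wn; case: ifP => // _; apply: Hb; apply: contra wn => zs.
  by apply/mapP; exists (mul (inv x) w); rewrite ?xxinv.
Qed.

Variable r : nat.

Definition msupp (s : seq T) (A : mat Gam r) := forall i j, supp s (A i j).

Lemma mulM_supp (A B : mat Gam r) s s' : uniq s -> msupp s A -> msupp s' B ->
  msupp (prods s s') (mulM p Gam r A B).
Proof.
move=> us HA HB i j x xn; rewrite /mulM big_addZp big1 ?mod0z // => l _.
exact: (convG_supp us (HA i l) (HB l j)).
Qed.

Lemma hom_mulM (A B : mat Gam r) (A' B' : mat Q r) s s' C :
  uniq s -> uniq s' -> msupp s A -> msupp s' B ->
  (forall i j y, canon y == y -> A' i j y K = red (A i j) y K) ->
  (forall i j y, canon y == y -> B' i j y K = red (B i j) y K) ->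
  canon C == C -> forall i j,
  mulM p Q r A' B' i j C K = red (mulM p Gam r A B i j) C K.
Proof.
move=> us us' HA HB hA hB /eqP cC i j.
rewrite /mulM big_addZp.
rewrite (red_fin _ (undup_uniq _) (mulM_supp us HA HB i j)).
transitivity ((\sum_(l < r) red (conv p Gam (A i l) (B l j)) C K) %% M)%Z.
  congr (_ %% _)%Z; apply: eq_bigr => l _.
  apply: (@hom_conv (A i l) (B l j) (A' i l) (B' l j) s s' C us us' (HA i l) (HB l j)) => // y ry.
    exact: hA.
  exact: hB.
transitivity ((\sum_(l < r) \sum_(x <- prods s s')
   (if canon x == C then conv p Gam (A i l) (B l j) x K else 0)) %% M)%Z.
  apply: eq_modz_sum => l _.
  by rewrite (red_fin _ (undup_uniq _) (convG_supp us (HA i l) (HB l j))) modz_mod.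
rewrite exchange_big /=; apply: eq_modz_sum => x _.
case: ifP => _; last by rewrite big1.
rewrite /mulM big_addZp modz_mod. done.
Qed.

Lemma hom_one (C : T) i j : canon C == C ->
  oneM p Q r i j C K = red (oneM p Gam r i j) C K.
Proof.
move=> cC; rewrite (@red_fin _ [:: one]) //; last first.
  move=> x; rewrite inE /oneM => /negPf->; by rewrite andbF.
rewrite big_seq1 /oneM /= eqxx andbT (eq_sym C).
by case: (i == j); case: (canon one == C); rewrite /oneZp /zeroZp ?modz_mod ?mod0z.
Qed.

Lemma red_sub (a b : T -> Zpad) s C : uniq s -> supp s a -> supp s b ->
  red (fun x => subZp p (a x) (b x)) C K = subZp p (red a C) (red b C) K.
Proof.
move=> us Ha Hb.
have Hab : supp s (fun x => subZp p (a x) (b x)).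
  by move=> x xn; rewrite /subZp /addZp /oppZp Ha // Hb // oppr0 mod0z add0r mod0z.
rewrite (red_fin _ us Hab) /subZp /addZp /oppZp (red_fin _ us Ha) (red_fin _ us Hb).
rewrite [RHS]modzDmr [RHS]modzDml modzBmr.
transitivity ((\sum_(x <- s) (if canon x == C then a x K - b x K else 0)) %% M)%Z.
  by apply: eq_modz_sum => x _; case: ifP => _; rewrite ?modz_mod ?modzDmr.
congr (_ %% _)%Z; rewrite -sumrN -big_split /=; apply: eq_bigr => x _.
by case: ifP; rewrite ?oppr0 ?addr0.
Qed.

Fixpoint spow (su : seq T) (m : nat) : seq T :=
  if m is m'.+1 then prods su (spow su m') else [:: one].

Lemma spow_uniq su m : uniq (spow su m).
Proof. by case: m => [|m] //=; rewrite undup_uniq. Qed.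

Lemma pow_supp (A : mat Gam r) su : uniq su -> msupp su A ->
  forall m, msupp (spow su m) (powM p Gam r A m).
Proof.
move=> us HA; elim=> [|m IH] /=.
  move=> i j x; rewrite inE /powM /= /oneM => /negPf->; by rewrite andbF.
exact: mulM_supp.
Qed.

Lemma hom_pow (A : mat Gam r) (A' : mat Q r) su : uniq su -> msupp su A ->
  (forall i j y, canon y == y -> A' i j y K = red (A i j) y K) ->
  forall m i j C, canon C == C ->
  powM p Q r A' m i j C K = red (powM p Gam r A m i j) C K.
Proof.
move=> us HA hA; elim=> [|m IH] i j C cC; first exact: hom_one.
have H := (@hom_mulM A (powM p Gam r A m) A' (powM p Q r A' m) su (spow su m) C us (spow_uniq _ _) HA (@pow_supp _ _ us HA m) hA).
exact: H.

Qed.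

End Main.

Section Div.
Local Set Implicit Arguments.
Local Unset Strict Implicit.
Local Open Scope ring_scope.

Lemma dvdz_modM (d X M : int) : (d %| M)%Z -> (d %| X)%Z -> (d %| X %% M)%Z.
Proof.
move=> dM dX; have -> : (X %% M)%Z = X - (X %/ M)%Z * M.
  by rewrite {2}(divz_eq X M) addrAC subrr add0r.
by rewrite rpredB // dvdz_mull.
Qed.

Lemma pk_dvd p a b : (a <= b)%N -> (pk p a %| pk p b)%Z.
Proof. move=> ab; rewrite /pk /dvdz /=; exact: dvdn_exp2l. Qed.

Lemma pkD p a b : pk p (a + b) = pk p a * pk p b.
Proof. by rewrite /pk expnD PoszM. Qed.

Variables (p K : nat) (T : countType) (mul : T -> T -> T) (inv : T -> T) (one : T).
Variable r : nat.
Local Notation M := (pk p K).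
Local Notation Gam := (GData T predT mul inv one).

Lemma pow_dvd (A : mat Gam r) su : uniq su -> msupp K su A ->
  (forall i j x, (pk p (minn 1 K) %| A i j x K)%Z) ->
  forall m i j x, (pk p (minn m K) %| powM p Gam r A m i j x K)%Z.
Proof.
move=> us HA hA; elim=> [|m IH] i j x.
  by rewrite min0n /pk expn0 dvd1z.
have dM : (pk p (minn m.+1 K) %| M)%Z by apply: pk_dvd; exact: geq_minr.
rewrite /powM /= /mulM big_addZp; apply: dvdz_modM => //.
apply: rpred_sum => l _; rewrite (convG_fin p _ _ us (HA i l)).
apply: dvdz_modM => //; apply: rpred_sum => y _; apply: dvdz_modM => //.
apply: dvdz_trans (dvdz_mul (hA i l y) (IH l j (mul (inv y) x))).
rewrite -pkD; apply: pk_dvd; lia.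
Qed.

End Div.

Section Fin.
Local Set Implicit Arguments.
Local Unset Strict Implicit.
Local Open Scope ring_scope.
Variables (p K : nat).
Variables (T : countType) (mul : T -> T -> T) (inv : T -> T) (one : T).
Hypothesis Hg : is_group mul inv one.
Variable N : T -> bool.
Hypothesis HN : normal_fi mul inv one N.
Local Notation M := (pk p K).
Local Notation canon := (Defs.canon T mul inv N).

Lemma red_zero (h : T -> Zpad) C : (forall x, h x K = 0) -> red p mul inv one N h C K = 0.
Proof.
move=> H; by rewrite (@red_fin p K T mul inv one N h [::] C) //= ?big_nil ?mod0z.
Qed.

Lemma red_one (h : T -> Zpad) s : uniq s -> supp K s h -> (h one K %% M)%Z = h one K ->
  (forall x, x \in s -> x != one -> ~~ N x) ->
  red p mul inv one N h (canon one) K = h one K.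
Proof.
move=> us Hs hn HNs; rewrite (red_fin p mul inv one N (canon one) us Hs).
have E : forall x, x \in s -> (canon x == canon one) = (x == one).
  move=> x xs; case: (eqVneq x one) => [->|ne]; first by rewrite eqxx.
  apply/negbTE/negP => /eqP /(canon_rel Hg HN); rewrite (mulx1 Hg) => /(NV HN).
  by rewrite (invK Hg); apply/negP; apply: HNs.
rewrite -big_mkcond /= big_seq_cond.
rewrite (eq_bigl (fun x => (x \in s) && (x == one))); last first.
  by move=> x /=; case: (boolP (x \in s)) => xs //=; rewrite E.
rewrite -big_seq_cond; case: (boolP (one \in s)) => os.
  by rewrite sum_pred1_seq.
rewrite big1_seq ?mod0z; first by rewrite Hs.
by move=> x /andP[/eqP-> ]; rewrite (negPf os).
Qed.

End Fin.

Section Final.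
Local Open Scope ring_scope.

Lemma divZp_ext p nu (x y : Zpad) k :
  x (k + logn p nu)%N = y (k + logn p nu)%N -> divZp p nu x k = divZp p nu y k.
Proof. by move=> h; rewrite /divZp h. Qed.

Lemma two_exp v : (2 * v <= 2 ^ v)%N.
Proof.
case: v => [|v] //; rewrite expnS leq_mul2l /=; exact: ltn_expl.
Qed.

Lemma logn_bound p k m : prime p -> (2 * k <= m)%N -> (k + logn p m <= m)%N.
Proof.
move=> pp km; case: (posnP m) => [m0|m0].
  by move: km; rewrite m0 leqn0 muln_eq0 /= => /eqP->; rewrite logn0.
set v := logn p m.
have h1 : (p ^ v <= m)%N by apply: dvdn_leq => //; exact: pfactor_dvdnn.
have h2 : (2 ^ v <= p ^ v)%N.
  case: (posnP v) => [->|vp] //; rewrite leq_exp2r //; exact: prime_gt1.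
have h3 := two_exp v.
lia.
Qed.

Lemma fin_bound (P : nat -> nat -> Prop) :
  (forall n B B', (B <= B')%N -> P n B -> P n B') ->
  (forall n, exists B, P n B) -> forall m, exists B, forall n, (n < m)%N -> P n B.
Proof.
move=> mono H; elim=> [|m [B HB]]; first by exists 0%N.
have [B' HB'] := H m; exists (maxn B B') => n; rewrite ltnS leq_eqVlt => /orP[/eqP->|nm].
  by apply: mono HB'; exact: leq_maxr.
by apply: mono (HB n nm); exact: leq_maxl.
Qed.

End Final.

Theorem proposition4p16 (p : nat) (T : countType) (mul : T -> T -> T)
  (inv : T -> T) (one : T) (Gn : nat -> T -> bool) (r : nat)
  (g : 'I_r -> 'I_r -> T -> Zpad) :
  prime p ->
  is_group mul inv one ->
  residually_finite mul inv one ->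
  (forall n, normal_fi mul inv one (Gn n)) ->
  tends_to_e one Gn ->
  (forall i j, c0Zp p (GData T predT mul inv one) (g i j)) ->
  let Gam := GData T predT mul inv one in
  let f := addM p Gam r (oneM p Gam r) (scaleM p Gam r p g) in
  padic_conv
    (fun n => logdet p (quotG T mul inv one (Gn n)) r
                     (reduce T mul inv one (Gn n) p r f))
    (logdet p Gam r f).
Proof.
move=> Hp Hg _ HN Hte Hc Gam f.
have p0 : (0 < p)%N by exact: prime_gt0.
have [sg Hsg] : exists sg : 'I_r -> 'I_r -> nat -> seq T,
    forall i j k x, x \notin sg i j k -> g i j x k = 0.
  exists (fun i j k => proj1_sig (constructive_indefinite_description _ (proj2 (Hc i j) k))).
  move=> i j k x; case: constructive_indefinite_description => s /= Hs xn.
  by apply: Hs.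
pose su K := undup (one :: flatten [seq sg i j K | i <- enum 'I_r, j <- enum 'I_r]).
have us : forall K, uniq (su K) by move=> K; exact: undup_uniq.
have sgsu : forall K i j x, x \notin su K -> x != one /\ x \notin sg i j K.
  move=> K i j x; rewrite mem_undup inE negb_or => /andP[-> xn]; split=> //.
  apply: contra xn => xs; apply/flattenP; exists (sg i j K) => //.
  by apply/allpairsP; exists (i, j); rewrite !mem_enum.
pose uG := subM p Gam r (oneM p Gam r) f.
have oneSupp : forall K, msupp K (su K) (oneM p Gam r).
  move=> K i j x xn; have [x1 _] := sgsu K i j x xn.
  by rewrite /oneM /= (negPf x1) andbF.
have fsupp : forall K, msupp K (su K) f.
  move=> K i j x xn; have [x1 xg] := sgsu K i j x xn.
  rewrite /f /addM /scaleM /addZp /mulZp (oneSupp K i j x xn) Hsg //.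
  by rewrite GRing.mulr0 mod0z GRing.add0r mod0z.
have uGsupp : forall K, msupp K (su K) uG.
  move=> K i j x xn; rewrite /uG /subM /subZp /addZp /oppZp.
  by rewrite (oneSupp K i j x xn) (fsupp K i j x xn) GRing.oppr0 mod0z GRing.add0r mod0z.
have hA : forall t K i j y, Defs.canon T mul inv (Gn t) y == y ->
    subM p (quotG T mul inv one (Gn t)) r (oneM p (quotG T mul inv one (Gn t)) r)
      (reduce T mul inv one (Gn t) p r f) i j y K = red p mul inv one (Gn t) (uG i j) y K.
  move=> t K i j y ry.
  rewrite /uG /subM (red_sub p mul inv one (Gn t) y (us K) (oneSupp K i j) (fsupp K i j)).
  by rewrite /subZp /addZp (hom_one p K one i j ry).
have uGdvd : forall K i j x, (pk p (minn 1 K) %| uG i j x K)%Z.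
  move=> K i j x; case: K => [|K]; first by rewrite /pk /= dvd1z.
  have pM : (pk p 1 %| pk p K.+1)%Z by apply: pk_dvd.
  have -> : minn 1 K.+1 = 1%N by rewrite /minn; case: (K).
  rewrite /uG /subM /subZp /addZp /oppZp modzDmr.
  rewrite /f /addM /addZp modzBmr.
  set o := oneM p Gam r i j x K.+1.
  have E : forall o W : int, (o - (o + W) = - W)%R.
    by move=> o1 W; rewrite GRing.opprD GRing.addrA GRing.subrr GRing.add0r.
  rewrite E.
  apply: dvdz_modM => //; rewrite GRing.rpredN; apply: dvdz_modM => //.
  apply: dvdz_mulr.
  rewrite /natZp; apply: dvdz_modM => //; by rewrite /pk expn1 dvdzz.
have listB : forall s : seq T, exists B, forall x, x \in s -> x != one ->
    forall t, (B <= t)%N -> ~~ Gn t x.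
  elim=> [|y s [B HB]]; first by exists 0%N.
  case: (eqVneq y one) => [->|y1].
    exists B => x; rewrite inE => /orP[/eqP->|xs]; first by rewrite eqxx.
    exact: HB.
  have yn : y <> one by apply/eqP.
  have [My HMy] := Hte y yn.
  exists (maxn My B) => x; rewrite inE => /orP[/eqP->|xs] x1 t tB.
    by apply: HMy; lia.
  by apply: HB => //; lia.
move=> k.
pose Kn n := (k + logn p n.+1)%N.
have [B HB] : exists B, forall n, (n < 2 * k)%N ->
    forall x, x \in spow mul one (su (Kn n)) n.+1 -> x != one ->
    forall t, (B <= t)%N -> ~~ Gn t x.
  apply: (@fin_bound (fun n B => forall x, x \in spow mul one (su (Kn n)) n.+1 -> x != one ->
    forall t, (B <= t)%N -> ~~ Gn t x)).
    move=> n B B' BB' H x xs x1 t tB; apply: H => //; exact: leq_trans BB' tB.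
  move=> n; exact: listB.
exists B => t tB.
rewrite /logdet /trG !big_addZp; congr (_ %% _)%Z; apply: eq_bigr => i _.
rewrite /logM /oppZp; congr ((- _) %% _)%Z; apply: padic_series_ext => n.
apply: divZp_ext.
have rc : Defs.canon T mul inv (Gn t) (Defs.canon T mul inv (Gn t) one) == Defs.canon T mul inv (Gn t) one.
  by rewrite (canonK Hg (HN t)).
rewrite (hom_pow Hg (HN t) (us (Kn n)) (uGsupp (Kn n)) (hA t (Kn n)) n.+1 i i rc).
have hn : (powM p Gam r uG n.+1 i i one (Kn n) %% pk p (Kn n))%Z = powM p Gam r uG n.+1 i i one (Kn n).
  by rewrite /powM /= /mulM big_addZp modz_mod.
case: (ltnP n (2 * k)) => nk.
  apply: (red_one Hg (HN t) (spow_uniq _ _ _ _) (pow_supp p Hg (us (Kn n)) (uGsupp (Kn n)) i i) hn).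
  by move=> x xs x1; apply: (HB n nk x xs x1 t tB).
have Z : forall x, powM p Gam r uG n.+1 i i x (Kn n) = 0%Z.
  move=> x.
  have hd := pow_dvd (us (Kn n)) (uGsupp (Kn n)) (fun i j x => uGdvd (Kn n) i j x) n.+1 i i x.
  have e : minn n.+1 (Kn n) = Kn n.
    apply/minn_idPr; apply: logn_bound => //; lia.
  rewrite e in hd; move: hd; rewrite /powM /= /mulM big_addZp => hd.
  by rewrite -modz_mod; apply/dvdz_mod0P.
by rewrite red_zero // Z.
Qed.
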